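(* Let $M\le N$ and $\mathbf{A}\in\mathbb{R}^{M\times N}$ with full row rank. Let $\lambda>0$ and let $\rho:\mathbb{R}^{M\times M}\to\mathbb{R}$ be differentiable and $\mu$-strongly convex ($\mu>0$). Fix constants $K>0$ and $c>0$ and let $\mathcal{P}_{K,c}$ be the set of probability distributions $\pi$ of pairs $(\mathbf{x},\mathbf{y})\in\mathbb{R}^N\times\mathbb{R}^M$ with $\mathbb{E}_\pi\|\mathbf{x}\|_2^2\le K$, $\mathbb{E}_\pi\|\mathbf{y}\|_2^2\le K$, and $\mathbb{E}_\pi[\mathbf{y}\mathbf{y}^\top]\succeq c\,\mathbf{I}$. For $\pi\in\mathcal{P}_{K,c}$ let $\mathbf{B}^\ast_\pi$ be the unique minimizer over $\mathbf{B}\in\mathbb{R}^{M\times M}$ of $F_\pi(\mathbf{B})=\mathbb{E}_\pi\|\mathbf{A}^\top\mathbf{B}\mathbf{y}-\mathbf{x}\|_2^2+\lambda\rho(\mathbf{B})$. Then there is a constant $C>0$, depending on $\mathbf{A},K,c,\mu$ and $\nabla\rho(\mathbf{0})$ but not on $\lambda$, such that for all $\pi,\pi'\in\mathcal{P}_{K,c}$, $$\|\mathbf{B}^\ast_\pi-\mathbf{B}^\ast_{\pi'}\|_F\le\frac{C}{\lambda\mu}\,W_2(\pi,\pi').$$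
   Context: $\|\cdot\|_F$ is the Frobenius norm and $\nabla\rho$ is the gradient with respect to the Frobenius inner product; $\rho$ is $\mu$-strongly convex if $\rho-\frac{\mu}{2}\|\cdot\|_F^2$ is convex. $W_2$ denotes the 2-Wasserstein distance between probability distributions on $\mathbb{R}^N\times\mathbb{R}^M\cong\mathbb{R}^{N+M}$ with the Euclidean norm: $W_2(\pi,\pi')^2=\inf\mathbb{E}\|(\mathbf{x},\mathbf{y})-(\mathbf{x}',\mathbf{y}')\|_2^2$ over all couplings of $\pi$ and $\pi'$. *)

(* Defs.v *)
From HB Require Import structures.
From mathcomp Require Import all_boot all_order all_algebra.
From mathcomp Require Import all_classical all_reals all_analysis.
Set Implicit Arguments. Unset Strict Implicit. Unset Printing Implicit Defensive.
Import Order.TTheory GRing.Theory Num.Theory.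
Import numFieldNormedType.Exports.
Local Open Scope classical_set_scope.
Local Open Scope ring_scope.

Definition sqnorm {R : realType} {n : nat} (v : 'cV[R]_n) : R :=
  \sum_(i < n) v i 0 ^+ 2.

Definition frob {R : realType} {m n : nat} (B : 'M[R]_(m, n)) : R :=
  Num.sqrt (\sum_(i < m) \sum_(j < n) B i j ^+ 2).

(* The underlying space R^N x R^M, with the Borel sigma-algebra of its
   (product = Euclidean) topology. *)
Definition pairsp (R : realType) (n m : nat) : Type :=
  g_sigma_algebraType (@open ('cV[R]_n * 'cV[R]_m)%type).

Definition convex_fun {R : realType} {m : nat} (g : 'M[R]_m -> R) : Prop :=
  forall (X Y : 'M[R]_m) (t : R), 0 <= t <= 1 ->
    g ((1 - t) *: X + t *: Y) <= (1 - t) * g X + t * g Y.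

Definition strongly_convex {R : realType} {m : nat} (mu : R)
  (rho : 'M[R]_m -> R) : Prop :=
  convex_fun (fun X => rho X - mu / 2 * frob X ^+ 2).

(* gradient w.r.t. the Frobenius inner product at X: the matrix whose
   (i,j) entry is the derivative in direction of the elementary matrix E_ij *)
Definition grad {R : realType} {m : nat} (rho : 'M[R]_m -> R) (X : 'M[R]_m)
  : 'M[R]_m := \matrix_(i, j) ('d rho X (delta_mx i j : 'M[R]_m)).

Section Dist.
Context {R : realType} {n m : nat}.
Local Notation Z := (pairsp R n m).

Definition ymoment (P : probability Z R) : 'M[R]_m :=
  \matrix_(i, j) Rintegral P setT (fun z : Z => (z.2 i 0) * (z.2 j 0)).

Definition PKc (K c : R) (P : probability Z R) : Prop :=
  [/\ (\int[P]_z (sqnorm z.1)%:E <= K%:E)%E,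
      (\int[P]_z (sqnorm z.2)%:E <= K%:E)%E &
      forall v : 'cV[R]_m,
        c * (v^T *m v) 0 0 <= (v^T *m ymoment P *m v) 0 0 ].

Definition coupling (P Q : probability Z R) (G : probability (Z * Z)%type R)
  : Prop :=
  (forall A : set Z, measurable A -> G (fst @^-1` A) = P A) /\
  (forall A : set Z, measurable A -> G (snd @^-1` A) = Q A).

Definition W2sq (P Q : probability Z R) : \bar R :=
  ereal_inf [set (\int[G]_w (sqnorm (w.1.1 - w.2.1) + sqnorm (w.1.2 - w.2.2))%:E)%E
            | G in coupling P Q].

(* 2-Wasserstein distance (finite on P_{K,c}) *)
Definition W2 (P Q : probability Z R) : R := Num.sqrt (fine (W2sq P Q)).

Definition Fobj (A : 'M[R]_(m, n)) (lam : R) (rho : 'M[R]_m -> R)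
  (P : probability Z R) (B : 'M[R]_m) : \bar R :=
  (\int[P]_z (sqnorm (A^T *m B *m z.2 - z.1))%:E + (lam * rho B)%:E)%E.

Definition is_minimizer (A : 'M[R]_(m, n)) (lam : R) (rho : 'M[R]_m -> R)
  (P : probability Z R) (B : 'M[R]_m) : Prop :=
  forall B' : 'M[R]_m, (Fobj A lam rho P B <= Fobj A lam rho P B')%E.

End Dist.

(* Main.v *)
Require Import Defs.
From HB Require Import structures.
From mathcomp Require Import all_boot all_order all_algebra.
From mathcomp Require Import all_classical all_reals all_analysis.
From mathcomp Require Import measurable_realfun.
From mathcomp Require Import ring lra.
Import Order.TTheory GRing.Theory Num.Theory.
Import numFieldNormedType.Exports.
Local Open Scope classical_set_scope.
Local Open Scope ring_scope.
Section Alg.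
Context {R : realType}.

Definition dotv {k} (u v : 'cV[R]_k) : R := \sum_i u i 0 * v i 0.
Definition fs {p q} (X : 'M[R]_(p, q)) : R := \sum_i \sum_j X i j ^+ 2.

Lemma sqnorm_ge0 k (v : 'cV[R]_k) : 0 <= sqnorm v.
Proof. by apply: sumr_ge0 => i _; exact: sqr_ge0. Qed.

Lemma fs_ge0 p q (X : 'M[R]_(p,q)) : 0 <= fs X.
Proof. by apply: sumr_ge0 => i _; apply: sumr_ge0 => j _; exact: sqr_ge0. Qed.

Lemma frob2 p q (X : 'M[R]_(p,q)) : frob X ^+ 2 = fs X.
Proof. by rewrite /frob sqr_sqrtr //; exact: fs_ge0. Qed.

Lemma amgm2 (x y e : R) : 0 < e -> 2 * (x * y) <= e * x ^+ 2 + e^-1 * y ^+ 2.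
Proof.
move=> e0.
have -> : e * x ^+ 2 + e^-1 * y ^+ 2 = 2 * (x * y) + e^-1 * (e * x - y) ^+ 2.
  by field; rewrite gt_eqF.
rewrite lerDl; apply: mulr_ge0; [rewrite invr_ge0 ltW|exact: sqr_ge0] => //.
Qed.

Lemma amgm_sum k (a b : 'I_k -> R) (e : R) : 0 < e ->
  2 * `|\sum_i a i * b i| <= e * \sum_i a i ^+ 2 + e^-1 * \sum_i b i ^+ 2.
Proof.
move=> e0.
have key : forall b' : 'I_k -> R, (forall i, b' i ^+ 2 = b i ^+ 2) ->
   2 * \sum_i a i * b' i <= e * \sum_i a i ^+ 2 + e^-1 * \sum_i b i ^+ 2.
  move=> b' hb; rewrite mulr_sumr [e * _]mulr_sumr [e^-1 * _]mulr_sumr -big_split /=.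
  apply: ler_sum => i _; rewrite -hb; exact: amgm2.
have [hpos|hneg] := lerP 0 (\sum_i a i * b i).
  by rewrite ger0_norm //; apply: key.
rewrite ltr0_norm // -sumrN.
have := key (fun i => - b i) (fun i => sqrrN _); congr (_ <= _).
by congr (_ * _); apply: eq_bigr => i _; rewrite mulrN.
Qed.

Lemma cs_sum k (a b : 'I_k -> R) :
  (\sum_i a i * b i) ^+ 2 <= (\sum_i a i ^+ 2) * (\sum_i b i ^+ 2).
Proof.
set s := \sum_i a i * b i; set A := \sum_i a i ^+ 2; set B := \sum_i b i ^+ 2.
have A0 : 0 <= A by apply: sumr_ge0 => i _; exact: sqr_ge0.
have B0 : 0 <= B by apply: sumr_ge0 => i _; exact: sqr_ge0.
have [s0|s0] := eqVneq s 0; first by rewrite s0 expr0n /= mulr_ge0.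
have t0 : 0 < `|s| by rewrite normr_gt0.
have [A0'|Apos] := eqVneq A 0.
  exfalso; move: s0; rewrite /s big1 ?eqxx // => i _.
  have : a i ^+ 2 = 0.
    apply: (psumr_eq0P (P := predT) (F := fun i => a i ^+ 2)) => //.
    by move=> j _; exact: sqr_ge0.
  by move/eqP; rewrite sqrf_eq0 => /eqP ->; rewrite mul0r.
have Ap : 0 < A by rewrite lt_def Apos A0.
have h := amgm_sum _ a b _ (divr_gt0 t0 Ap).
rewrite -/s -/A -/B in h.
have h2 : 2 * `|s| <= `|s| + A / `|s| * B.
  by move: h; rewrite invf_div divfK ?gt_eqF.
have h3 : `|s| <= A / `|s| * B by lra.
have h4 := ler_wpM2r (ltW t0) h3.
have e : A / `|s| * B * `|s| = A * B by field; rewrite gt_eqF.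
by rewrite -real_normK ?num_real // expr2 -e.
Qed.
End Alg.
Section D.
Context {R : realType} {m : nat}.

Definition fs' (X : 'M[R]_m) : R := \sum_i \sum_j X i j ^+ 2.

Lemma fsZ (t : R) (B : 'M[R]_m) : fs' (t *: B) = t ^+ 2 * fs' B.
Proof.
rewrite /fs' mulr_sumr; apply: eq_bigr => i _; rewrite mulr_sumr.
by apply: eq_bigr => j _; rewrite mxE exprMn.
Qed.

Lemma dlin (f : 'M[R]_m -> R) (B : 'M[R]_m) :
  'd f 0 B = \sum_i \sum_j B i j * 'd f 0 (delta_mx i j : 'M[R]_m).
Proof.
rewrite {1}(matrix_sum_delta B) linear_sum; apply: eq_bigr => i _.
rewrite linear_sum; apply: eq_bigr => j _.
by rewrite linearZ.
Qed.

Lemma dir_le (f : 'M[R]_m -> R) (B : 'M[R]_m) (c : R) :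
  differentiable f 0 ->
  (forall t, 0 < t <= 1 -> t^-1 * (f (t *: B) - f 0) <= c) ->
  'd f 0 B <= c.
Proof.
move=> hd ht.
rewrite -deriveE //.
have hcv := @diff_derivable _ _ _ f 0 B hd.
rewrite /derive.
set g := (fun h : R => _).
rewrite (cvg_at_rightE g 0 hcv).
apply: limr_le.
  apply/cvg_ex; exists (lim (g @ 0^')).
  move=> A /hcv /nbhs_ballP [_ /posnumP[e] xe_A].
  by exists e%:num => //= y xe_y /gt_eqF/negbT/xe_A; exact.
exists 1 => //= y; rewrite /ball /= sub0r normrN => hy y0.
rewrite /g /= addr0 /=.
apply: ht; rewrite y0 /=.
by move: hy; rewrite gtr0_norm // => /ltW.
Qed.
End D.
Section D2.
Context {R : realType} {m : nat}.
Lemma fs'_ge0 (X : 'M[R]_m) : 0 <= fs' X.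
Proof. by apply: sumr_ge0 => i _; apply: sumr_ge0 => j _; exact: sqr_ge0. Qed.

Lemma rho_lb (mu : R) (rho : 'M[R]_m -> R) : 0 <= mu ->
  (forall X, differentiable rho X) -> strongly_convex mu rho ->
  forall B : 'M[R]_m, \sum_i \sum_j B i j * grad rho 0 i j <= rho B - rho 0.
Proof.
move=> mu0 hd hc B.
have -> : \sum_i \sum_j B i j * grad rho 0 i j = 'd rho 0 B.
  rewrite dlin; apply: eq_bigr => i _; apply: eq_bigr => j _.
  by rewrite /grad mxE.
apply: dir_le => // t /andP [t0 t1].
have := hc 0 B t; rewrite t1 ltW // => /(_ isT).
rewrite scaler0 add0r /frob !sqr_sqrtr; try exact: fs'_ge0.
rewrite -/(fs' _) -/(fs' _) -/(fs' _) fsZ.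
have -> : fs' (0 : 'M[R]_m) = 0.
  by rewrite /fs' big1 // => i _; rewrite big1 // => j _; rewrite mxE expr0n.
have hB := fs'_ge0 B.
move=> H.
rewrite mulrC ler_pdivrMr //.
have : 0 <= mu * fs' B * (t - t ^+ 2).
  apply: mulr_ge0; first exact: mulr_ge0.
  by rewrite subr_ge0 expr2 ger_pMr.
nra.
Qed.
End D2.
Section Meas.
Context {d} {T : measurableType d} {R : realType}.
Definition mcv {k} (u : T -> 'cV[R]_k) :=
  forall i, measurable_fun setT (fun t => u t i 0).

Lemma mcvD k (u v : T -> 'cV[R]_k) : mcv u -> mcv v -> mcv (fun t => u t + v t).
Proof.
move=> hu hv i.
have -> : (fun t => (u t + v t) i 0) = (fun t => u t i 0 + v t i 0).
  by apply/funext => t; rewrite mxE.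
exact: measurable_funD.
Qed.

Lemma mcvN k (u : T -> 'cV[R]_k) : mcv u -> mcv (fun t => - u t).
Proof.
move=> hu i.
have -> : (fun t => (- u t) i 0) = (fun t => - u t i 0).
  by apply/funext => t; rewrite mxE.
exact: measurable_funN.
Qed.

Lemma mcvB k (u v : T -> 'cV[R]_k) : mcv u -> mcv v -> mcv (fun t => u t - v t).
Proof. by move=> hu hv; apply: mcvD => //; exact: mcvN. Qed.

Lemma mcvM p k (L : 'M[R]_(p, k)) (u : T -> 'cV[R]_k) : mcv u ->
  mcv (fun t => L *m u t).
Proof.
move=> hu i.
have -> : (fun t => (L *m u t) i 0) = (fun t => \sum_j L i j * u t j 0).
  by apply/funext => t; rewrite mxE.
by apply: measurable_sum => j; apply: measurable_funM.
Qed.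

Lemma msq k (u : T -> 'cV[R]_k) : mcv u -> measurable_fun setT (fun t => sqnorm (u t)).
Proof.
move=> hu; rewrite /sqnorm.
by apply: measurable_sum => j; apply: measurable_funX.
Qed.

End Meas.

Lemma mcv_comp {d} {T : measurableType d} {R : realType} d' (T' : measurableType d') k (u : T -> 'cV[R]_k) (phi : T' -> T) :
  mcv u -> measurable_fun setT phi -> mcv (fun t => u (phi t)).
Proof.
move=> hu hphi i.
exact: (measurableT_comp (f := fun t => u t i 0)).
Qed.

Section Int.
Context {d} {T : measurableType d} {R : realType}.
Variable P : probability T R.

Lemma int_bound (f g : T -> R) : measurable_fun setT f ->
  P.-integrable setT (EFin \o g) -> (forall t, `|f t| <= g t) ->
  P.-integrable setT (EFin \o f).
Proof.
move=> mf ig hfg; apply: (le_integrable measurableT _ _ ig).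
  exact/measurable_EFinP.
move=> t _ /=; rewrite lee_fin (le_trans (hfg t)) //.
exact: ler_norm.
Qed.

Lemma int_nonneg (s : T -> R) (K : R) : measurable_fun setT s ->
  (forall t, 0 <= s t) -> (\int[P]_t (s t)%:E <= K%:E)%E ->
  P.-integrable setT (EFin \o s).
Proof.
move=> ms s0 hK; apply/integrableP; split; first exact/measurable_EFinP.
apply: (le_lt_trans _ (ltry K)).
apply: le_trans hK; rewrite le_eqVlt; apply/orP; left; apply/eqP.
by apply: eq_integral => t _ /=; rewrite ger0_norm.
Qed.

Lemma intD (f g : T -> R) : P.-integrable setT (EFin \o f) ->
  P.-integrable setT (EFin \o g) -> P.-integrable setT (EFin \o (fun t => f t + g t)).
Proof.
move=> hf hg; apply: (eq_integrable measurableT _ _ _ (integrableD measurableT hf hg)).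
by move=> t _ /=; rewrite EFinD.
Qed.

Lemma intZ (k : R) (f : T -> R) : P.-integrable setT (EFin \o f) ->
  P.-integrable setT (EFin \o (fun t => k * f t)).
Proof.
move=> hf; apply: (eq_integrable measurableT _ _ _ (integrableZl measurableT k hf)).
by move=> t _ /=; rewrite EFinM.
Qed.

Lemma int_sum (I : Type) (s : seq I) (f : I -> T -> R) :
  (forall i, P.-integrable setT (EFin \o f i)) ->
  P.-integrable setT (EFin \o (fun t => \sum_(i <- s) f i t)).
Proof.
move=> hf; elim: s => [|i s IH].
  apply: (eq_integrable measurableT _ _ _ (integrable0 P setT)).
  by move=> t _ /=; rewrite big_nil.
apply: (eq_integrable measurableT _ _ _ (intD _ _ (hf i) IH)).
by move=> t _ /=; rewrite big_cons.
Qed.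

Lemma Rint_sum (I : Type) (s : seq I) (f : I -> T -> R) :
  (forall i, P.-integrable setT (EFin \o f i)) ->
  Rintegral P setT (fun t => \sum_(i <- s) f i t) =
  \sum_(i <- s) Rintegral P setT (f i).
Proof.
move=> hf; elim: s => [|i s IH].
  rewrite big_nil; under eq_Rintegral do rewrite big_nil.
  by rewrite Rintegral_cst // mul0r.
rewrite big_cons -IH -RintegralD //; last exact: int_sum.
by apply: eq_Rintegral => t _; rewrite big_cons.
Qed.

Lemma Rint_Z (k : R) (f : T -> R) : P.-integrable setT (EFin \o f) ->
  Rintegral P setT (fun t => k * f t) = k * Rintegral P setT f.
Proof. by move=> hf; rewrite RintegralZl. Qed.

Lemma Rint_le (f g : T -> R) : P.-integrable setT (EFin \o f) ->
  P.-integrable setT (EFin \o g) -> (forall t, f t <= g t) ->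
  Rintegral P setT f <= Rintegral P setT g.
Proof. by move=> hf hg hfg; apply: le_Rintegral. Qed.

Lemma Rint_bnd (s : T -> R) (K : R) : measurable_fun setT s ->
  (forall t, 0 <= s t) -> (\int[P]_t (s t)%:E <= K%:E)%E ->
  Rintegral P setT s <= K.
Proof.
move=> ms s0 hK; rewrite -lee_fin /Rintegral fineK //.
rewrite ge0_fin_numE; last by apply: integral_ge0 => t _; rewrite lee_fin.
exact: (le_lt_trans hK (ltry K)).
Qed.

Lemma Rint_cst (k : R) : Rintegral P setT (fun _ => k) = k.
Proof.
rewrite Rintegral_cst //.
have h : fine (P setT) = 1 by rewrite probability_setT.
by rewrite h mulr1.
Qed.

Lemma intE (f : T -> R) : P.-integrable setT (EFin \o f) ->
  (\int[P]_t (f t)%:E)%E = (Rintegral P setT f)%:E.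
Proof. by move=> hf; rewrite /Rintegral fineK //; exact: integrable_fin_num. Qed.

End Int.
Section Z.
Context {R : realType} {n m : nat}.
Local Notation Z := (pairsp R n m).

Lemma mcont (f : ('cV[R]_n * 'cV[R]_m)%type -> R) : continuous f ->
  measurable_fun [set: Z] (f : Z -> R).
Proof.
move=> /continuousP cf.
apply: (measurability _ (RGenOpens.measurableE R)).
move=> _ [_ [a [b ->] <-]]. apply: sub_sigma_algebra.
rewrite setTI. apply: cf. exact: interval_open.
Qed.

Lemma mc1 : mcv (fun z : Z => z.1).
Proof.
move=> i; apply: (mcont (fun z : (_ * _)%type => z.1 i 0)).
move=> z. apply: (@continuous_comp _ _ _ fst (fun M : 'cV[R]_n => M i 0)).
  exact: cvg_fst.
exact: coord_continuous.
Qed.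

Lemma mc2 : mcv (fun z : Z => z.2).
Proof.
move=> i; apply: (mcont (fun z : (_ * _)%type => z.2 i 0)).
move=> z. apply: (@continuous_comp _ _ _ snd (fun M : 'cV[R]_m => M i 0)).
  exact: cvg_snd.
exact: coord_continuous.
Qed.

Section Coup.
Variables (P Q : probability Z R) (G : probability (Z * Z)%type R).
Hypothesis cG : coupling P Q G.

Lemma T0_1 (s : Z -> R) : measurable_fun setT s -> (forall z, 0 <= s z) ->
  (\int[G]_w (s w.1)%:E = \int[P]_z (s z)%:E)%E.
Proof.
move=> ms s0.
have ms' : measurable_fun setT (EFin \o s) by exact/measurable_EFinP.
have h := ge0_integral_pushforward (@measurable_fst _ _ Z Z) G (D:=setT)
  (f := EFin \o s) measurableT ms' (fun z _ => s0 z : (0 <= (s z)%:E)%E).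
rewrite preimage_setT in h.
have -> : (\int[G]_w (s w.1)%:E = \int[G]_x ((EFin \o s) \o fst) x)%E by [].
rewrite -h; apply: eq_measure_integral => A mA _.
exact: (cG.1 A mA).
Qed.

Lemma T0_2 (s : Z -> R) : measurable_fun setT s -> (forall z, 0 <= s z) ->
  (\int[G]_w (s w.2)%:E = \int[Q]_z (s z)%:E)%E.
Proof.
move=> ms s0.
have ms' : measurable_fun setT (EFin \o s) by exact/measurable_EFinP.
have h := ge0_integral_pushforward (@measurable_snd _ _ Z Z) G (D:=setT)
  (f := EFin \o s) measurableT ms' (fun z _ => s0 z : (0 <= (s z)%:E)%E).
rewrite preimage_setT in h.
have -> : (\int[G]_w (s w.2)%:E = \int[G]_x ((EFin \o s) \o snd) x)%E by [].
rewrite -h; apply: eq_measure_integral => A mA _.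
exact: (cG.2 A mA).
Qed.

Lemma T1_1 (f : Z -> R) : measurable_fun setT f -> P.-integrable setT (EFin \o f) ->
  G.-integrable setT (EFin \o (fun w => f w.1)) /\
  Rintegral G setT (fun w => f w.1) = Rintegral P setT f.
Proof.
move=> mf hf.
have mf' : measurable_fun setT (EFin \o f) by exact/measurable_EFinP.
have hG : G.-integrable setT (EFin \o (fun w => f w.1)).
  apply/integrableP; split.
    by apply/measurable_EFinP; apply: (measurableT_comp mf); exact: measurable_fst.
  have e := T0_1 (fun z => `|f z|) (measurableT_comp (@normr_measurable R setT) mf)
     (fun z => normr_ge0 (f z)).
  have -> : (\int[G]_x `|(EFin \o (fun w => f w.1)) x| = \int[G]_w (`|f w.1|)%:E)%E by [].
  rewrite e; case/integrableP: hf => _; exact.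
split => //.
have hG' : G.-integrable (fst @^-1` setT) ((EFin \o f) \o fst) by rewrite preimage_setT.
have h := integral_pushforward (@measurable_fst _ _ Z Z) mf' hG' measurableT.
rewrite preimage_setT in h.
rewrite /Rintegral.
have -> : (\int[G]_w (f w.1)%:E = \int[G]_x ((EFin \o f) \o fst) x)%E by [].
rewrite -h; congr fine; apply: eq_measure_integral => A mA _.
exact: (cG.1 A mA).
Qed.

Lemma T1_2 (f : Z -> R) : measurable_fun setT f -> Q.-integrable setT (EFin \o f) ->
  G.-integrable setT (EFin \o (fun w => f w.2)) /\
  Rintegral G setT (fun w => f w.2) = Rintegral Q setT f.
Proof.
move=> mf hf.
have mf' : measurable_fun setT (EFin \o f) by exact/measurable_EFinP.
have hG : G.-integrable setT (EFin \o (fun w => f w.2)).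
  apply/integrableP; split.
    by apply/measurable_EFinP; apply: (measurableT_comp mf); exact: measurable_snd.
  have e := T0_2 (fun z => `|f z|) (measurableT_comp (@normr_measurable R setT) mf)
     (fun z => normr_ge0 (f z)).
  have -> : (\int[G]_x `|(EFin \o (fun w => f w.2)) x| = \int[G]_w (`|f w.2|)%:E)%E by [].
  rewrite e; case/integrableP: hf => _; exact.
split => //.
have hG' : G.-integrable (snd @^-1` setT) ((EFin \o f) \o snd) by rewrite preimage_setT.
have h := integral_pushforward (@measurable_snd _ _ Z Z) mf' hG' measurableT.
rewrite preimage_setT in h.
rewrite /Rintegral.
have -> : (\int[G]_w (f w.2)%:E = \int[G]_x ((EFin \o f) \o snd) x)%E by [].
rewrite -h; congr fine; apply: eq_measure_integral => A mA _.
exact: (cG.2 A mA).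
Qed.

End Coup.
End Z.
Section Mx.
Context {R : realType}.

Lemma sumD2 k (F G : 'I_k -> R) (a b : R) :
  \sum_i (a * F i + b * G i) = a * \sum_i F i + b * \sum_i G i.
Proof. by rewrite big_split /= !mulr_sumr. Qed.

Lemma sqnorm_mul p k (M : 'M[R]_(p, k)) (v : 'cV[R]_k) :
  sqnorm (M *m v) <= fs M * sqnorm v.
Proof.
rewrite /sqnorm /fs mulr_suml; apply: ler_sum => i _.
rewrite mxE; exact: (cs_sum _ (fun j => M i j) (fun j => v j 0)).
Qed.

Lemma fs_tr p k (M : 'M[R]_(p, k)) : fs M^T = fs M.
Proof.
rewrite /fs exchange_big /=; apply: eq_bigr => i _; apply: eq_bigr => j _.
by rewrite mxE.
Qed.

Lemma sqnormD k (u v : 'cV[R]_k) : sqnorm (u + v) <= 2 * sqnorm u + 2 * sqnorm v.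
Proof.
rewrite /sqnorm -sumD2; apply: ler_sum => i _; rewrite mxE.
have := sqr_ge0 (u i 0 - v i 0); lra.
Qed.

Lemma sqnormB k (u v : 'cV[R]_k) : sqnorm (u - v) <= 2 * sqnorm u + 2 * sqnorm v.
Proof.
rewrite /sqnorm -sumD2; apply: ler_sum => i _; rewrite !mxE.
have := sqr_ge0 (u i 0 + v i 0); lra.
Qed.

Lemma sqnormZ k (c : R) (v : 'cV[R]_k) : sqnorm (c *: v) = c ^+ 2 * sqnorm v.
Proof.
rewrite /sqnorm mulr_sumr; apply: eq_bigr => i _; by rewrite mxE exprMn.
Qed.

Lemma sqnormN k (v : 'cV[R]_k) : sqnorm (- v) = sqnorm v.
Proof. by rewrite /sqnorm; apply: eq_bigr => i _; rewrite mxE sqrrN. Qed.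

Lemma dot_amgm k (p q : 'cV[R]_k) (e : R) : 0 < e ->
  2 * `|dotv p q| <= e * sqnorm p + e^-1 * sqnorm q.
Proof. by move=> e0; exact: (amgm_sum _ (fun i => p i 0) (fun i => q i 0)). Qed.

Lemma fsD p k (X Y : 'M[R]_(p, k)) : fs (X + Y) <= 2 * fs X + 2 * fs Y.
Proof.
rewrite /fs -sumD2; apply: ler_sum => i _; rewrite -sumD2; apply: ler_sum => j _.
rewrite mxE; have := sqr_ge0 (X i j - Y i j); lra.
Qed.

Lemma ptw k (a b a' b' x x' : 'cV[R]_k) :
  (sqnorm (a - x) - sqnorm (b - x)) - (sqnorm (a' - x') - sqnorm (b' - x')) =
  dotv (a - b - (a' - b')) (a + b - 2 *: x) +
  dotv (a' - b') ((a + b - 2 *: x) - (a' + b' - 2 *: x')).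
Proof.
rewrite /sqnorm /dotv -!sumrB -big_split /=; apply: eq_bigr => i _.
rewrite !mxE; ring.
Qed.

Lemma h0diff k (a x : 'cV[R]_k) :
  sqnorm (a - x) - sqnorm (0 - x) >= sqnorm a / 2 - 2 * sqnorm x.
Proof.
rewrite /sqnorm -sumrB mulr_suml mulr_sumr -sumrB; apply: ler_sum => i _.
rewrite !mxE; have := sqr_ge0 (a i 0 - 2 * x i 0); nra.
Qed.

Lemma dsum_le p k (F G : 'I_p -> 'I_k -> R) : (forall i j, F i j <= G i j) ->
  \sum_i \sum_j F i j <= \sum_i \sum_j G i j.
Proof. by move=> h; apply: ler_sum => i _; apply: ler_sum => j _. Qed.

Lemma dsumD p k (F G : 'I_p -> 'I_k -> R) (a b : R) :
  \sum_i \sum_j (a * F i j + b * G i j) =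
  a * \sum_i \sum_j F i j + b * \sum_i \sum_j G i j.
Proof. by rewrite -sumD2; apply: eq_bigr => i _; rewrite sumD2. Qed.

Lemma dot_lb p (X Y : 'M[R]_p) (e : R) : 0 < e ->
  - (e * fs X + e^-1 * fs Y) / 2 <= \sum_i \sum_j X i j * Y i j.
Proof.
move=> e0.
have E1 := dsumD _ _ (fun i j => X i j * Y i j)
  (fun i j => e * X i j ^+ 2 + e^-1 * Y i j ^+ 2) 2 1.
have E2 := dsumD _ _ (fun i j => X i j ^+ 2) (fun i j => Y i j ^+ 2) e e^-1.
suff : 0 <= \sum_i \sum_j (2 * (X i j * Y i j) + 1 * (e * X i j ^+ 2 + e^-1 * Y i j ^+ 2)).
  rewrite E1 E2 mul1r /fs; lra.
apply: sumr_ge0 => i _; apply: sumr_ge0 => j _.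
have := amgm2 (- X i j) (Y i j) _ e0; rewrite sqrrN; lra.
Qed.

End Mx.
Section Sig.
Context {R : realType}.
Lemma sigma_ex m n (A : 'M[R]_(m, n)) : \rank A = m ->
  exists2 s, 0 < s & forall v : 'cV[R]_m, s * sqnorm v <= sqnorm (A^T *m v).
Proof.
move=> hA.
set M := A *m A^T.
have Mu : M \in unitmx.
  rewrite -row_free_unit -kermx_eq0.
  apply/eqP/row_matrixP => i; rewrite row0.
  set u := row i (kermx M).
  have hu : u *m M = 0 by apply/sub_kermxP; exact: row_sub.
  have huA : u *m A = 0.
    have h0 : (u *m A) *m (u *m A)^T = 0.
      by rewrite trmx_mul mulmxA -(mulmxA u A) hu mul0mx.
    apply/matrixP => a b; rewrite [RHS]mxE.
    have := congr1 (fun X : 'M[R]_1 => X 0 0) h0; rewrite /= mxE [RHS]mxE => hs.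
    have : (u *m A) a b ^+ 2 = 0.
      rewrite (ord1 a).
      apply: (psumr_eq0P (P := predT) (F := fun j => (u *m A) 0 j ^+ 2)) => //.
      - by move=> j _; exact: sqr_ge0.
      - rewrite -[RHS]hs; apply: eq_bigr => j _; by rewrite expr2 [(u *m A)^T _ _]mxE.
    by move/eqP; rewrite sqrf_eq0; move/eqP.
  have rf : row_free A by rewrite /row_free hA.
  by apply: (row_free_inj rf); rewrite /= huA mul0mx.
set F := fs (invmx M *m A).
have F0 : 0 <= F by exact: fs_ge0.
exists (F + 1)^-1; first by rewrite invr_gt0; lra.
move=> v.
have ev : v = (invmx M *m A) *m (A^T *m v).
  by rewrite -mulmxA (mulmxA A) -/M mulKmx.
have h := sqnorm_mul _ _ (invmx M *m A) (A^T *m v).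
rewrite -ev in h.
have hv := sqnorm_ge0 _ (A^T *m v). rewrite -/F in h.
rewrite mulrC -ler_pdivlMr ?invr_gt0; last lra.
rewrite invrK; nra.
Qed.
End Sig.
Section H.
Context {R : realType} {n m : nat}.
Local Notation Z := (pairsp R n m).
Variable (A : 'M[R]_(m, n)).

Definition hB (B : 'M[R]_m) (z : Z) : R := sqnorm (A^T *m B *m z.2 - z.1).

Lemma mhB B : measurable_fun setT (hB B).
Proof.
apply: msq; apply: mcvB; last exact: mc1.
exact: (mcvM _ _ (A^T *m B) (fun z : Z => z.2) mc2).
Qed.

Lemma hB_ge0 B z : 0 <= hB B z.
Proof. exact: sqnorm_ge0. Qed.

Lemma single_le k (v : 'cV[R]_k) j : v j 0 ^+ 2 <= sqnorm v.
Proof.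
rewrite /sqnorm (bigD1 j) //= lerDl; apply: sumr_ge0 => i _; exact: sqr_ge0.
Qed.

Variables (P : probability Z R) (K : R).
Hypothesis h1 : (\int[P]_z (sqnorm z.1)%:E <= K%:E)%E.
Hypothesis h2 : (\int[P]_z (sqnorm z.2)%:E <= K%:E)%E.

Lemma i1 : P.-integrable setT (EFin \o (fun z : Z => sqnorm z.1)).
Proof. apply: (int_nonneg P _ K _ _ h1); [exact: msq mc1| move=> z; exact: sqnorm_ge0]. Qed.
Lemma i2 : P.-integrable setT (EFin \o (fun z : Z => sqnorm z.2)).
Proof. apply: (int_nonneg P _ K _ _ h2); [exact: msq mc2| move=> z; exact: sqnorm_ge0]. Qed.

Lemma iq (f : Z -> R) (c : R) : measurable_fun setT f ->
  (forall z, `|f z| <= c * (sqnorm z.1 + sqnorm z.2)) ->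
  P.-integrable setT (EFin \o f).
Proof.
move=> mf hf; apply: (int_bound P _ _ mf _ hf).
by apply: intZ; apply: intD; [exact: i1|exact: i2].
Qed.

Lemma ihB B : P.-integrable setT (EFin \o hB B).
Proof.
apply: (iq _ (2 * fs (A^T *m B) + 2) (mhB B)) => z.
rewrite ger0_norm; last exact: hB_ge0.
have e1 := sqnormB _ (A^T *m B *m z.2) z.1.
have e2 := sqnorm_mul _ _ (A^T *m B) z.2.
have e3 := sqnorm_ge0 _ z.1. have e4 := sqnorm_ge0 _ z.2.
have e5 := fs_ge0 _ _ (A^T *m B).
rewrite /hB; nra.
Qed.

Lemma Rs1 : Rintegral P setT (fun z : Z => sqnorm z.1) <= K.
Proof. apply: (Rint_bnd P _ K _ _ h1); [exact: msq mc1| move=> z; exact: sqnorm_ge0]. Qed.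
Lemma Rs2 : Rintegral P setT (fun z : Z => sqnorm z.2) <= K.
Proof. apply: (Rint_bnd P _ K _ _ h2); [exact: msq mc2| move=> z; exact: sqnorm_ge0]. Qed.

Lemma FobjE lam rho B :
  Fobj A lam rho P B = (Rintegral P setT (hB B) + lam * rho B)%:E.
Proof. by rewrite /Fobj EFinD -intE //; exact: ihB. Qed.

Lemma iyy j k : P.-integrable setT (EFin \o (fun z : Z => z.2 j 0 * z.2 k 0)).
Proof.
apply: (iq _ 1); first by apply: measurable_funM; exact: mc2.
move=> z; rewrite mul1r.
have a1 := single_le _ z.2 j. have a2 := single_le _ z.2 k.
have a3 : 2 * `|z.2 j 0 * z.2 k 0| <= z.2 j 0 ^+ 2 + z.2 k 0 ^+ 2.
  have := amgm_sum _ (fun _ : 'I_1 => z.2 j 0) (fun _ => z.2 k 0) 1 ltr01.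
  by rewrite !big_ord1 invr1 !mul1r.
have := sqnorm_ge0 _ z.1; lra.
Qed.

Lemma ibyi (B : 'M[R]_m) i : P.-integrable setT (EFin \o (fun z : Z => (B *m z.2) i 0 ^+ 2)).
Proof.
apply: (iq _ (fs B)).
  by apply: measurable_funX; exact: (mcvM _ _ B (fun z : Z => z.2) mc2).
move=> z; rewrite ger0_norm ?sqr_ge0 //.
have := single_le _ (B *m z.2) i; have := sqnorm_mul _ _ B z.2.
have := sqnorm_ge0 _ z.1; have := fs_ge0 _ _ B; nra.
Qed.

Lemma Eby_row (B : 'M[R]_m) i :
  Rintegral P setT (fun z : Z => (B *m z.2) i 0 ^+ 2) =
  \sum_j \sum_k (B i j * B i k) * ymoment P j k.
Proof.
have ex : forall z : Z, (B *m z.2) i 0 ^+ 2 =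
   \sum_j \sum_k (B i j * B i k) * (z.2 j 0 * z.2 k 0).
  move=> z; rewrite mxE expr2 mulr_suml; apply: eq_bigr => j _.
  rewrite mulr_sumr; apply: eq_bigr => k _; ring.
under eq_Rintegral do rewrite ex.
rewrite Rint_sum; last first.
  move=> j; apply: int_sum => k; apply: intZ; exact: iyy.
apply: eq_bigr => j _; rewrite Rint_sum; last first.
  move=> k; apply: intZ; exact: iyy.
apply: eq_bigr => k _; rewrite Rint_Z; last exact: iyy.
by rewrite /ymoment mxE.
Qed.

Lemma Ey_lb (c : R)
  (hc : forall v : 'cV[R]_m, c * (v^T *m v) 0 0 <= (v^T *m ymoment P *m v) 0 0)
  (B : 'M[R]_m) :
  c * fs B <= Rintegral P setT (fun z : Z => sqnorm (B *m z.2)).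
Proof.
rewrite /sqnorm Rint_sum; last by move=> i; exact: ibyi.
rewrite /fs mulr_sumr; apply: ler_sum => i _.
rewrite Eby_row.
have := hc (\col_j B i j).
have e1 : ((\col_j B i j)^T *m \col_j B i j) 0 0 = \sum_j B i j ^+ 2.
  by rewrite mxE; apply: eq_bigr => j _; rewrite !mxE expr2.
have e2 : ((\col_j B i j)^T *m ymoment P *m \col_j B i j) 0 0 =
    \sum_j \sum_k (B i j * B i k) * ymoment P j k.
  rewrite mxE; under eq_bigr do rewrite mxE mulr_suml.
  rewrite exchange_big /=; apply: eq_bigr => j _; apply: eq_bigr => k _.
  rewrite !mxE; ring.
by rewrite e1 e2.
Qed.

Lemma iBy (B : 'M[R]_m) : P.-integrable setT (EFin \o (fun z : Z => sqnorm (B *m z.2))).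
Proof.
apply: (iq _ (fs B)); first by apply: msq; exact: (mcvM _ _ B (fun z : Z => z.2) mc2).
move=> z; rewrite ger0_norm ?sqnorm_ge0 //.
have := sqnorm_mul _ _ B z.2.
have := sqnorm_ge0 _ z.1; have := fs_ge0 _ _ B; nra.
Qed.

Lemma Hdiff_lb (s c : R) (s0 : 0 < s)
  (hs : forall v : 'cV[R]_m, s * sqnorm v <= sqnorm (A^T *m v))
  (hc : forall v : 'cV[R]_m, c * (v^T *m v) 0 0 <= (v^T *m ymoment P *m v) 0 0)
  (B : 'M[R]_m) :
  s * c * fs B / 2 - 2 * K <= Rintegral P setT (hB B) - Rintegral P setT (hB 0).
Proof.
rewrite -RintegralB //; try exact: ihB.
have hpt : forall z : Z, s / 2 * sqnorm (B *m z.2) + (-2) * sqnorm z.1 <= hB B z - hB 0 z.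
  move=> z; rewrite /hB mulmx0 mul0mx.
  have := h0diff _ (A^T *m B *m z.2) z.1.
  have := hs (B *m z.2); rewrite mulmxA; lra.
have iD : P.-integrable setT (EFin \o (fun z => hB B z - hB 0 z)).
  apply: (eq_integrable measurableT _ _ _ (integrableB measurableT (ihB B) (ihB 0))).
  by move=> t _ /=; rewrite EFinB.
have i3 := intZ P (s/2) _ (iBy B).
have i4 := intZ P (-2) _ i1.
have hle := Rint_le P _ _ (intD P _ _ i3 i4) iD hpt.
rewrite RintegralD // !Rint_Z // in hle; try exact: iBy; try exact: i1.
have := Ey_lb c hc B; have := Rs1.
have : s / 2 * (c * fs B) <= s / 2 * Rintegral P setT (fun z : Z => sqnorm (B *m z.2)).
  by apply: ler_wpM2l; [lra|exact: Ey_lb].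
lra.
Qed.

Lemma sq_mid k (a b x : 'cV[R]_k) :
  sqnorm ((1 - 2^-1) *: a + 2^-1 *: b - x) <= 2^-1 * sqnorm (a - x) + 2^-1 * sqnorm (b - x).
Proof.
rewrite /sqnorm -sumD2; apply: ler_sum => i _; rewrite !mxE.
have := sqr_ge0 (a i 0 - b i 0); lra.
Qed.

Lemma fs_mid (X Y : 'M[R]_m) :
  fs ((1 - 2^-1) *: X + 2^-1 *: Y) = 2^-1 * fs X + 2^-1 * fs Y - 4^-1 * fs (X - Y).
Proof.
transitivity (\sum_i \sum_j (1 * (2^-1 * X i j ^+ 2 + 2^-1 * Y i j ^+ 2)
   + (-4^-1) * (X - Y) i j ^+ 2)).
  by rewrite /fs; apply: eq_bigr => i _; apply: eq_bigr => j _; rewrite !mxE; field.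
rewrite dsumD dsumD /fs; lra.
Qed.

Lemma mid_min (lam mu : R) (rho : 'M[R]_m -> R) (lam0 : 0 < lam)
  (hsc : strongly_convex mu rho) (B1 Y : 'M[R]_m) :
  is_minimizer A lam rho P B1 ->
  Rintegral P setT (hB B1) + lam * rho B1 + lam * mu / 4 * fs (B1 - Y) <=
  Rintegral P setT (hB Y) + lam * rho Y.
Proof.
move=> hmin.
set M := (1 - 2^-1) *: B1 + 2^-1 *: Y.
have hm := hmin M; rewrite !FobjE lee_fin in hm.
have hc := hsc B1 Y 2^-1.
have t01 : 0 <= (2^-1 : R) <= 1 by apply/andP; split; lra.
have {hc} := hc t01; rewrite !frob2 fs_mid => hc.
have hpt : forall z : Z, hB M z <= 2^-1 * hB B1 z + 2^-1 * hB Y z.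
  move=> z; rewrite /hB -/M /M mulmxDr -!scalemxAr mulmxDl -!scalemxAl.
  exact: sq_mid.
have hint := Rint_le P _ _ (ihB M) (intD P _ _ (intZ P _ _ (ihB B1)) (intZ P _ _ (ihB Y))) hpt.
rewrite RintegralD // ?Rint_Z // in hint; try (apply: intZ; exact: ihB); try exact: ihB.
have hr : lam * rho M <= lam * (2^-1 * rho B1 + 2^-1 * rho Y - mu / 8 * fs (B1 - Y)).
  by apply: ler_wpM2l; [exact: ltW|lra].
lra.
Qed.

End H.
Section Pt.
Context {R : realType}.

Lemma real_comb (d de fA fS P1 Q1 P2 Q2 sy sx sy' syy sxx t1 t2 : R) :
  0 < d -> 0 < de -> 0 <= fA -> 0 <= fS -> 0 <= sy -> 0 <= sx -> 0 <= sy' ->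
  0 <= syy -> 0 <= sxx ->
  P1 <= fA * (d ^+ 2 * syy) -> Q1 <= 2 * (fA * (fS * sy)) + 2 * (4 * sx) ->
  P2 <= fA * (d ^+ 2 * sy') -> Q2 <= 2 * (fA * (fS * syy)) + 2 * (4 * sxx) ->
  t1 <= (de * d)^-1 * P1 + ((de * d)^-1)^-1 * Q1 ->
  t2 <= (d / de) * Q2 + (d / de)^-1 * P2 ->
  t1 + t2 <= d * ((fA + 2 * fA * fS + 8) / de * (sxx + syy) +
                  de * (fA + 2 * fA * fS + 8) * (sy + sx + sy')).
Proof.
move=> d0 de0 fA0 fS0 sy0 sx0 sy'0 syy0 sxx0 hP1 hQ1 hP2 hQ2 ht1 ht2.
set u := d / de. set v := de * d.
have u0 : 0 < u by rewrite divr_gt0.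
have v0 : 0 < v by rewrite mulr_gt0.
have e1 : (de * d)^-1 * (fA * (d ^+ 2 * syy)) = u * (fA * syy).
  rewrite /u; field; rewrite ?gt_eqF //.
have e2 : (d / de)^-1 * (fA * (d ^+ 2 * sy')) = v * (fA * sy').
  rewrite /v; field; rewrite ?gt_eqF //.
have a1 : (de * d)^-1 * P1 <= u * (fA * syy).
  by rewrite -e1; apply: ler_wpM2l => //; rewrite invr_ge0 ltW // mulr_gt0.
have a2 : ((de * d)^-1)^-1 * Q1 <= v * (2 * (fA * (fS * sy)) + 2 * (4 * sx)).
  by rewrite invrK; apply: ler_wpM2l => //; exact: ltW.
have a3 : (d / de) * Q2 <= u * (2 * (fA * (fS * syy)) + 2 * (4 * sxx)).
  by apply: ler_wpM2l => //; exact: ltW.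
have a4 : (d / de)^-1 * P2 <= v * (fA * sy').
  by rewrite -e2; apply: ler_wpM2l => //; rewrite invr_ge0 ltW // divr_gt0.
have -> : d * ((fA + 2 * fA * fS + 8) / de * (sxx + syy) +
                  de * (fA + 2 * fA * fS + 8) * (sy + sx + sy')) =
   u * ((fA + 2 * fA * fS + 8) * (sxx + syy)) + v * ((fA + 2 * fA * fS + 8) * (sy + sx + sy')).
  rewrite /u /v; field; rewrite ?gt_eqF //.
have fAfS : 0 <= fA * fS by exact: mulr_ge0.
have b1 : u * (fA * syy) + u * (2 * (fA * (fS * syy)) + 2 * (4 * sxx)) <=
          u * ((fA + 2 * fA * fS + 8) * (sxx + syy)).
  rewrite -mulrDr; apply: ler_wpM2l; first exact: ltW.
  have : 0 <= (fA + 2 * fA * fS) * sxx by apply: mulr_ge0 => //; lra.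
  have : 0 <= fA * fS * syy by exact: mulr_ge0.
  have : 0 <= fA * fS * sxx by exact: mulr_ge0.
  have : 0 <= fA * syy by exact: mulr_ge0.
  have : 0 <= fA * sxx by exact: mulr_ge0.
  nra.
have b2 : v * (2 * (fA * (fS * sy)) + 2 * (4 * sx)) + v * (fA * sy') <=
          v * ((fA + 2 * fA * fS + 8) * (sy + sx + sy')).
  rewrite -mulrDr; apply: ler_wpM2l; first exact: ltW.
  have : 0 <= fA * fS * sy by exact: mulr_ge0.
  have : 0 <= fA * fS * sx by exact: mulr_ge0.
  have : 0 <= fA * fS * sy' by exact: mulr_ge0.
  have : 0 <= fA * sy by exact: mulr_ge0.
  have : 0 <= fA * sx by exact: mulr_ge0.
  have : 0 <= fA * sy' by exact: mulr_ge0.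
  nra.
lra.
Qed.
Lemma ptbound m n (A : 'M[R]_(m, n)) (B1 B2 : 'M[R]_m) (x x' : 'cV[R]_n)
  (y y' : 'cV[R]_m) (de : R) :
  0 < de -> 0 < frob (B2 - B1) ->
  2 * ((sqnorm (A^T *m B2 *m y - x) - sqnorm (A^T *m B1 *m y - x)) -
       (sqnorm (A^T *m B2 *m y' - x') - sqnorm (A^T *m B1 *m y' - x'))) <=
  frob (B2 - B1) * ((fs A + 2 * fs A * fs (B2 + B1) + 8) / de *
                      (sqnorm (x - x') + sqnorm (y - y')) +
                    de * (fs A + 2 * fs A * fs (B2 + B1) + 8) *
                      (sqnorm y + sqnorm x + sqnorm y')).
Proof.
move=> de0 d0.
set d := frob (B2 - B1).
rewrite ptw.
set a := A^T *m B2 *m y. set b := A^T *m B1 *m y.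
set a' := A^T *m B2 *m y'. set b' := A^T *m B1 *m y'.
have hp1 : a - b - (a' - b') = A^T *m ((B2 - B1) *m (y - y')).
  by rewrite /a /b /a' /b' !mulmxBr !mulmxBl !mulmxBr !mulmxA.
have hq1 : a + b - 2 *: x = A^T *m ((B2 + B1) *m y) - 2 *: x.
  by rewrite /a /b mulmxDl mulmxDr !mulmxA.
have hp2 : a' - b' = A^T *m ((B2 - B1) *m y').
  by rewrite /a' /b' mulmxBl mulmxBr !mulmxA.
have hq2 : (a + b - 2 *: x) - (a' + b' - 2 *: x') =
     A^T *m ((B2 + B1) *m (y - y')) - 2 *: (x - x').
  rewrite mulmxBr mulmxBr !mulmxDl !mulmxDr !mulmxA -/a -/b -/a' -/b' scalerBr.
  by apply/matrixP => i j; rewrite !mxE; ring.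
rewrite hq2 hp1 hq1 hp2.
set p1 := A^T *m _. set q1 := _ - 2 *: x. set p2 := A^T *m ((B2 - B1) *m y').
set q2 := _ - 2 *: (x - x').
have fA0 := fs_ge0 _ _ A.
have fS0 := fs_ge0 _ _ (B2 + B1).
have fD : fs (B2 - B1) = d ^+ 2 by rewrite /d frob2.
have mb : forall (M : 'M[R]_(n, m)) (N : 'M[R]_m) (v : 'cV[R]_m),
    sqnorm (M *m (N *m v)) <= fs M * (fs N * sqnorm v).
  move=> M N v; apply: (le_trans (sqnorm_mul _ _ M (N *m v))).
  apply: ler_wpM2l; first exact: fs_ge0.
  exact: sqnorm_mul.
have hP1 : sqnorm p1 <= fs A * (d ^+ 2 * sqnorm (y - y')).
  by rewrite -fD -(fs_tr _ _ A); exact: mb.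
have hP2 : sqnorm p2 <= fs A * (d ^+ 2 * sqnorm y').
  by rewrite -fD -(fs_tr _ _ A); exact: mb.
have hQ : forall (w : 'cV[R]_m) (u : 'cV[R]_n),
    sqnorm (A^T *m ((B2 + B1) *m w) - 2 *: u) <=
    2 * (fs A * (fs (B2 + B1) * sqnorm w)) + 2 * (4 * sqnorm u).
  move=> w u; apply: (le_trans (sqnormB _ _ _)).
  rewrite sqnormZ; have := mb A^T (B2 + B1) w; rewrite fs_tr.
  have -> : (2 : R) ^+ 2 = 4 by rewrite expr2; lra.
  lra.
have hQ1 := hQ y x. have hQ2 := hQ (y - y') (x - x').
have e1 : 0 < (de * d)^-1 by rewrite invr_gt0 mulr_gt0.
have e2 : 0 < d / de by rewrite divr_gt0.
have t1 := dot_amgm _ p1 q1 _ e1.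
have t2 := dot_amgm _ q2 p2 _ e2.
have dc : dotv q2 p2 = dotv p2 q2 by apply: eq_bigr => i _; rewrite mulrC.
rewrite dc in t2.
have r := real_comb _ _ _ _ _ _ _ _ _ _ _ _ _ _ _ d0 de0 fA0 fS0 (sqnorm_ge0 _ y) (sqnorm_ge0 _ x) (sqnorm_ge0 _ y')
  (sqnorm_ge0 _ (y - y')) (sqnorm_ge0 _ (x - x')) hP1 hQ1 hP2 hQ2 t1 t2.
have n1 := ler_norm (dotv p1 q1). have n2 := ler_norm (dotv p2 q2).
apply: le_trans r; lra.
Qed.
End Pt.
Section W.
Context {R : realType} {n m : nat}.
Local Notation Z := (pairsp R n m).

Definition cost (w : Z * Z) : R := sqnorm (w.1.1 - w.2.1) + sqnorm (w.1.2 - w.2.2).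

Lemma mcost : measurable_fun setT cost.
Proof.
apply: measurable_funD; apply: msq; apply: mcvB.
- exact: (mcv_comp _ _ _ _ _ mc1 measurable_fst).
- exact: (mcv_comp _ _ _ _ _ mc1 measurable_snd).
- exact: (mcv_comp _ _ _ _ _ mc2 measurable_fst).
- exact: (mcv_comp _ _ _ _ _ mc2 measurable_snd).
Qed.

Variables (P Q : probability Z R) (K : R).
Hypothesis p1 : (\int[P]_z (sqnorm z.1)%:E <= K%:E)%E.
Hypothesis p2 : (\int[P]_z (sqnorm z.2)%:E <= K%:E)%E.
Hypothesis q1 : (\int[Q]_z (sqnorm z.1)%:E <= K%:E)%E.
Hypothesis q2 : (\int[Q]_z (sqnorm z.2)%:E <= K%:E)%E.

Lemma prodcoup : coupling P Q (P \x Q)%E.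
Proof.
split => A mA.
  rewrite -setXT; apply: (eq_trans (product_measure1E P Q mA measurableT)).
  by transitivity (P A * 1)%E; [congr (_ * _)%E; exact: probability_setT|exact: mule1].
rewrite -setTX; apply: (eq_trans (product_measure1E P Q measurableT mA)).
by transitivity (1 * Q A)%E; [congr (_ * _)%E; exact: probability_setT|exact: mul1e].
Qed.

Lemma icost (G : probability (Z * Z)%type R) : coupling P Q G ->
  G.-integrable setT (EFin \o cost).
Proof.
move=> cG.
have ms1 := msq _ _ (@mc1 R n m). have ms2 := msq _ _ (@mc2 R n m).
have a1 := (T1_1 P Q G cG _ ms1 (i1 P K p1)).1.
have a2 := (T1_1 P Q G cG _ ms2 (i2 P K p2)).1.
have a3 := (T1_2 P Q G cG _ ms1 (i1 Q K q1)).1.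
have a4 := (T1_2 P Q G cG _ ms2 (i2 Q K q2)).1.
apply: (int_bound G _ (fun w : Z * Z => 2 * (sqnorm w.1.1 + sqnorm w.2.1) + 2 * (sqnorm w.1.2 + sqnorm w.2.2)) mcost).
  by apply: intD; apply: intZ; apply: intD.
move=> w; rewrite /cost ger0_norm; last by apply: addr_ge0; exact: sqnorm_ge0.
have := sqnormB _ w.1.1 w.2.1; have := sqnormB _ w.1.2 w.2.2; lra.
Qed.

Lemma W2facts : 0 <= fine (W2sq P Q) /\ W2sq P Q = (fine (W2sq P Q))%:E /\
  forall e, 0 < e -> exists G, coupling P Q G /\
     Rintegral G setT cost <= fine (W2sq P Q) + e.
Proof.
have ge0 : (0 <= W2sq P Q)%E.
  apply: le_ereal_inf_tmp => _ [G _ <-].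
  by apply: integral_ge0 => w _; rewrite lee_fin addr_ge0 ?sqnorm_ge0.
have lty : (W2sq P Q < +oo)%E.
  apply: (@le_lt_trans _ _ (Rintegral (P \x Q)%E setT cost)%:E); last exact: ltry.
  apply: ge_ereal_inf; exists (Rintegral (P \x Q)%E setT cost)%:E => //.
  exists (P \x Q)%E; first exact: prodcoup.
  exact: (intE _ _ (icost _ prodcoup)).
have fin : W2sq P Q = (fine (W2sq P Q))%:E by rewrite fineK // ge0_fin_numE.
split; first by rewrite fine_ge0.
split => // e e0.
have : (W2sq P Q < (fine (W2sq P Q) + e)%:E)%E.
  by rewrite [X in (X < _)%E]fin lte_fin ltrDl.
case/ereal_inf_lt => _ [G cG <-] hlt.
exists G; split => //.
rewrite -lee_fin -(intE _ _ (icost _ cG)); exact: ltW.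
Qed.

End W.
Section Main.
Context {R : realType} {m n : nat}.
Local Notation Z := (pairsp R n m).

Lemma fsN p q (X : 'M[R]_(p, q)) : fs (- X) = fs X.
Proof. by apply: eq_bigr => i _; apply: eq_bigr => j _; rewrite mxE sqrrN. Qed.

Lemma Bbound (A : 'M[R]_(m, n)) (K c mu s lam : R) (rho : 'M[R]_m -> R)
  (G0 : 'M[R]_m) (P : probability Z R) (B : 'M[R]_m) :
  0 < K -> 0 < c -> 0 < mu -> 0 < s -> 0 < lam ->
  (forall v : 'cV[R]_m, s * sqnorm v <= sqnorm (A^T *m v)) ->
  (forall X : 'M[R]_m, differentiable rho X) ->
  strongly_convex mu rho -> grad rho 0 = G0 ->
  PKc K c P -> is_minimizer A lam rho P B ->
  fs B <= 4 * K / (s * c) + 16 * fs G0 / mu ^+ 2.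
Proof.
move=> K0 c0 mu0 s0 lam0 hs hd hsc hg [h1 h2 hc] hmin.
have hm := mid_min A P K h1 h2 lam mu rho lam0 hsc B 0 hmin.
rewrite subr0 in hm.
have hdl := Hdiff_lb A P K h1 h2 s c s0 hs hc B.
have hr := rho_lb mu rho (ltW mu0) hd hsc B; rewrite hg in hr.
have e0 : 0 < mu / 4 by rewrite divr_gt0.
have hdot := dot_lb _ B G0 (mu / 4) e0.
have hlr : lam * (- ((mu / 4) * fs B + (mu / 4)^-1 * fs G0) / 2) <= lam * (rho B - rho 0).
  by apply: ler_wpM2l; [exact: ltW|lra].
set X := fs B in hm hdl hlr *. set g := fs G0 in hlr *.
have X0 : 0 <= X by exact: fs_ge0.
have g0 : 0 <= g by exact: fs_ge0.
have hlin : (s * c / 2 + lam * mu / 8) * X <= 2 * K + lam * (2 / mu) * g.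
  have E : lam * (- ((mu / 4) * X + (mu / 4)^-1 * g) / 2) =
            - (lam * mu / 8) * X - lam * (2 / mu) * g.
    by field; rewrite gt_eqF.
  rewrite E in hlr.
  have -> : (s * c / 2 + lam * mu / 8) * X = s * c * X / 2 + lam * mu / 8 * X by ring.
  lra.
set Bm := 4 * K / (s * c) + 16 * g / mu ^+ 2.
have sc0 : 0 < s * c by rewrite mulr_gt0.
have coef0 : 0 < s * c / 2 + lam * mu / 8.
  have : 0 < lam * mu by rewrite mulr_gt0.
  lra.
have hBm : 2 * K + lam * (2 / mu) * g <= (s * c / 2 + lam * mu / 8) * Bm.
  have -> : (s * c / 2 + lam * mu / 8) * Bm =
     2 * K + lam * (2 / mu) * g + (s * c / 2 * (16 * g / mu ^+ 2) + lam * mu / 8 * (4 * K / (s * c))).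
    by rewrite /Bm; field; rewrite ?gt_eqF.
  have mu2 : 0 < mu ^+ 2 by exact: exprn_gt0.
  have lm : 0 < lam * mu by exact: mulr_gt0.
  have t1 : 0 <= s * c / 2 * (16 * g / mu ^+ 2).
    apply: mulr_ge0; first lra.
    by apply: divr_ge0; [lra|exact: ltW].
  have t2 : 0 <= lam * mu / 8 * (4 * K / (s * c)).
    apply: mulr_ge0; first lra.
    by apply: divr_ge0; [lra|exact: ltW].
  lra.
have := le_trans hlin hBm.
by rewrite ler_pM2l.
Qed.

Lemma intB' {d} {T : measurableType d} (P : probability T R) (f g : T -> R) :
  P.-integrable setT (EFin \o f) -> P.-integrable setT (EFin \o g) ->
  P.-integrable setT (EFin \o (fun t => f t - g t)).
Proof.
move=> hf hg; apply: (eq_integrable measurableT _ _ _ (integrableB measurableT hf hg)).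
by move=> t _ /=; rewrite EFinB.
Qed.

Lemma Rlin2 {d} {T : measurableType d} (P : probability T R) (f g : T -> R) :
  P.-integrable setT (EFin \o f) -> P.-integrable setT (EFin \o g) ->
  Rintegral P setT (fun t => 2 * (f t - g t)) =
  2 * (Rintegral P setT f - Rintegral P setT g).
Proof.
move=> hf hg; rewrite Rint_Z; last exact: intB'.
by rewrite RintegralB.
Qed.

Lemma Rlin4 {d} {T : measurableType d} (P : probability T R) (f1 f2 f3 f4 : T -> R)
  (a b c : R) :
  P.-integrable setT (EFin \o f1) -> P.-integrable setT (EFin \o f2) ->
  P.-integrable setT (EFin \o f3) -> P.-integrable setT (EFin \o f4) ->
  Rintegral P setT (fun t => a * (b * f1 t + c * (f2 t + f3 t + f4 t))) =
  a * (b * Rintegral P setT f1 + c * (Rintegral P setT f2 +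
        Rintegral P setT f3 + Rintegral P setT f4)).
Proof.
move=> i1 i2 i3 i4.
have i23 := intD P _ _ i2 i3.
have i234 := intD P _ _ i23 i4.
have iz1 := intZ P b _ i1.
have iz2 := intZ P c _ i234.
rewrite Rint_Z; last exact: intD.
rewrite RintegralD // Rint_Z // Rint_Z // RintegralD // RintegralD //.
Qed.

End Main.
Section Core.
Context {R : realType} {m n : nat}.
Local Notation Z := (pairsp R n m).

Lemma core (A : 'M[R]_(m, n)) (K lam mu de : R) (rho : 'M[R]_m -> R)
  (P Q : probability Z R) (BP BQ : 'M[R]_m) (G : probability (Z * Z)%type R) :
  0 < lam -> strongly_convex mu rho ->
  (\int[P]_z (sqnorm z.1)%:E <= K%:E)%E -> (\int[P]_z (sqnorm z.2)%:E <= K%:E)%E ->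
  (\int[Q]_z (sqnorm z.1)%:E <= K%:E)%E -> (\int[Q]_z (sqnorm z.2)%:E <= K%:E)%E ->
  is_minimizer A lam rho P BP -> is_minimizer A lam rho Q BQ ->
  coupling P Q G -> 0 < de -> 0 < frob (BQ - BP) ->
  lam * mu * frob (BQ - BP) <=
    (fs A + 2 * fs A * fs (BQ + BP) + 8) / de * Rintegral G setT cost +
    de * (fs A + 2 * fs A * fs (BQ + BP) + 8) * (3 * K).
Proof.
move=> lam0 hsc p1 p2 q1 q2 hmP hmQ cG de0 d0.
have mP := mid_min A P K p1 p2 lam mu rho lam0 hsc BP BQ hmP.
have mQ := mid_min A Q K q1 q2 lam mu rho lam0 hsc BQ BP hmQ.
set d := frob (BQ - BP) in d0 *.
have d2 : fs (BQ - BP) = d ^+ 2 by rewrite /d frob2.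
have d2' : fs (BP - BQ) = d ^+ 2 by have := fsN _ _ (BQ - BP); rewrite opprB => ->; exact: d2.
rewrite d2 in mQ; rewrite d2' in mP.
set gg := fun z : Z => hB A BQ z - hB A BP z.
have mgg : measurable_fun setT gg by apply: measurable_funB; exact: mhB.
have igP : P.-integrable setT (EFin \o gg) by apply: intB'; exact: (ihB A P K p1 p2).
have igQ : Q.-integrable setT (EFin \o gg) by apply: intB'; exact: (ihB A Q K q1 q2).
have eP : Rintegral P setT gg = Rintegral P setT (hB A BQ) - Rintegral P setT (hB A BP).
  by rewrite RintegralB //; exact: (ihB A P K p1 p2).
have eQ : Rintegral Q setT gg = Rintegral Q setT (hB A BQ) - Rintegral Q setT (hB A BP).
  by rewrite RintegralB //; exact: (ihB A Q K q1 q2).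
have [a1 e1] := T1_1 P Q G cG gg mgg igP.
have [a2 e2] := T1_2 P Q G cG gg mgg igQ.
have ms1 := msq _ _ (@mc1 R n m). have ms2 := msq _ _ (@mc2 R n m).
have [b1 f1] := T1_1 P Q G cG _ ms2 (i2 P K p2).
have [b2 f2] := T1_1 P Q G cG _ ms1 (i1 P K p1).
have [b3 f3] := T1_2 P Q G cG _ ms2 (i2 Q K q2).
have ic := icost P Q K p1 p2 q1 q2 G cG.
set k0 := fs A + 2 * fs A * fs (BQ + BP) + 8.
have hpt : forall w : Z * Z, 2 * (gg w.1 - gg w.2) <=
    d * (k0 / de * cost w + de * k0 * (sqnorm w.1.2 + sqnorm w.1.1 + sqnorm w.2.2)).
  move=> w; exact: (ptbound _ _ A BP BQ w.1.1 w.2.1 w.1.2 w.2.2 de de0 d0).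
have hle := Rint_le G _ _ (intZ G 2 _ (intB' G _ _ a1 a2))
  (intZ G d _ (intD G _ _ (intZ G _ _ ic) (intZ G _ _ (intD G _ _ (intD G _ _ b1 b2) b3)))) hpt.
rewrite Rlin2 // Rlin4 // e1 e2 f1 f2 f3 eP eQ in hle.
have r1 := Rs1 P K p1. have r2 := Rs2 P K p2. have r3 := Rs2 Q K q2.
have k00 : 0 <= k0.
  rewrite /k0; have h1 := fs_ge0 _ _ A; have h2 := fs_ge0 _ _ (BQ + BP).
  have : 0 <= fs A * fs (BQ + BP) by exact: mulr_ge0.
  move: h1 h2; clear; lra.
have hb : de * k0 * (Rintegral P setT (fun z : Z => sqnorm z.2) +
    Rintegral P setT (fun z : Z => sqnorm z.1) + Rintegral Q setT (fun z : Z => sqnorm z.2))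
    <= de * k0 * (3 * K).
  apply: ler_wpM2l; first by apply: mulr_ge0 => //; exact: ltW.
  move: r1 r2 r3; clear; lra.
have hq : lam * mu * d ^+ 2 <= 2 * (Rintegral P setT (hB A BQ) - Rintegral P setT (hB A BP) -
    (Rintegral Q setT (hB A BQ) - Rintegral Q setT (hB A BP))).
  have E : lam * mu * d ^+ 2 = 4 * (lam * mu / 4 * d ^+ 2) by field.
  rewrite E; move: mP mQ; clear; lra.
have hsum : lam * mu * d ^+ 2 <= d * (k0 / de * Rintegral G setT cost + de * k0 * (3 * K)).
  apply: (le_trans hq (le_trans hle _)).
  apply: ler_wpM2l; first exact: ltW.
  move: hb; clear; lra.
rewrite -(ler_pM2l d0); apply: (le_trans _ hsum).
by rewrite le_eqVlt; apply/orP; left; apply/eqP; ring.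
Qed.
End Core.
Theorem mainTheorem2 (R : realType) (m n : nat) (A : 'M[R]_(m, n))
  (K c mu : R) (G0 : 'M[R]_m) :
  (m <= n)%N -> \rank A = m -> 0 < K -> 0 < c -> 0 < mu ->
  exists C : R, 0 < C /\
  forall (lam : R) (rho : 'M[R]_m -> R),
    0 < lam ->
    (forall X : 'M[R]_m, differentiable rho X) ->
    strongly_convex mu rho ->
    grad rho 0 = G0 ->
    forall (P Q : probability (pairsp R n m) R) (BP BQ : 'M[R]_m),
      PKc K c P -> PKc K c Q ->
      is_minimizer A lam rho P BP -> is_minimizer A lam rho Q BQ ->
      frob (BP - BQ) <= C / (lam * mu) * W2 P Q.
Proof.
move=> hmn hA K0 c0 mu0.
have [s s0 hs] := sigma_ex _ _ A hA.
have fA0 : 0 <= fs A by exact: fs_ge0.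
have fG0 : 0 <= fs G0 by exact: fs_ge0.
set Bm := 4 * K / (s * c) + 16 * fs G0 / mu ^+ 2.
have Bm0 : 0 <= Bm.
  have t1 : 0 <= 4 * K / (s * c) by apply: divr_ge0; [lra|apply: mulr_ge0; exact: ltW].
  have t2 : 0 <= 16 * fs G0 / mu ^+ 2 by apply: divr_ge0; [lra|exact: sqr_ge0].
  rewrite /Bm; lra.
set k := fs A + 8 * fs A * Bm + 8.
have kp : 0 < k.
  have : 0 <= fs A * Bm by exact: mulr_ge0.
  rewrite /k; lra.
exists (k * (1 + 3 * K)); split; first by apply: mulr_gt0 => //; lra.
move=> lam rho lam0 hd hsc hg P Q BP BQ hP hQ hmP hmQ.
have bP := Bbound A K c mu s lam rho G0 P BP K0 c0 mu0 s0 lam0 hs hd hsc hg hP hmP.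
have bQ := Bbound A K c mu s lam rho G0 Q BQ K0 c0 mu0 s0 lam0 hs hd hsc hg hQ hmQ.
rewrite -/Bm in bP bQ.
case: hP => p1 p2 p3; case: hQ => q1 q2 q3.
have ef : frob (BP - BQ) = frob (BQ - BP).
  have := fsN _ _ (BQ - BP); rewrite opprB /fs => e.
  by rewrite /frob e.
rewrite ef; set d := frob (BQ - BP).
have d0 : 0 <= d by exact: sqrtr_ge0.
have [W0 [_ hW]] := W2facts P Q K p1 p2 q1 q2.
rewrite /W2; set W := fine (W2sq P Q) in W0 hW *.
have lm : 0 < lam * mu by exact: mulr_gt0.
have sW0 : 0 <= Num.sqrt W by exact: sqrtr_ge0.
have C0 : 0 <= k * (1 + 3 * K) / (lam * mu) * Num.sqrt W.
  apply: mulr_ge0 => //; apply: divr_ge0; last exact: ltW.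
  apply: mulr_ge0; [exact: ltW|lra].
have [->|dne] := eqVneq d 0; first exact: C0.
have dpos : 0 < d by rewrite lt_def dne d0.
set k0 := fs A + 2 * fs A * fs (BQ + BP) + 8.
have fS0 : 0 <= fs (BQ + BP) by exact: fs_ge0.
have k0p : 0 < k0.
  have : 0 <= fs A * fs (BQ + BP) by exact: mulr_ge0.
  rewrite /k0; lra.
have kk : k0 <= k.
  have h1 := fsD _ _ BQ BP.
  have h2 : fs (BQ + BP) <= 4 * Bm by lra.
  have h3 : fs A * fs (BQ + BP) <= fs A * (4 * Bm) by exact: ler_wpM2l.
  rewrite /k0 /k; lra.
have stepA : forall de, 0 < de -> lam * mu * d <= k0 / de * W + de * k0 * (3 * K).
  move=> de de0; apply/ler_addgt0Pr => e e0.
  have e' : 0 < e * de / k0 by rewrite divr_gt0 // mulr_gt0.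
  have [G [cG hG]] := hW _ e'.
  have hc := core A K lam mu de rho P Q BP BQ G lam0 hsc p1 p2 q1 q2 hmP hmQ cG de0 dpos.
  rewrite -/d -/k0 in hc.
  have h1 : k0 / de * Rintegral G setT cost <= k0 / de * (W + e * de / k0).
    by apply: ler_wpM2l => //; apply: divr_ge0; exact: ltW.
  have h2 : k0 / de * (W + e * de / k0) = k0 / de * W + e.
    by field; rewrite ?gt_eqF.
  move: hc h1; rewrite h2; lra.
have stepB : lam * mu * d <= k0 * (1 + 3 * K) * Num.sqrt W.
  apply/ler_addgt0Pr => e e0.
  set eta := e / (3 * k0 * K).
  have eta0 : 0 < eta by rewrite divr_gt0 // !mulr_gt0.
  have de0 : 0 < Num.sqrt W + eta by lra.
  have hA' := stepA _ de0.
  have hWs : W = Num.sqrt W ^+ 2 by rewrite sqr_sqrtr.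
  have h0 : W / (Num.sqrt W + eta) <= Num.sqrt W.
    rewrite ler_pdivrMr // {1}hWs expr2 mulrDr.
    have : 0 <= Num.sqrt W * eta by apply: mulr_ge0 => //; exact: ltW.
    lra.
  have h1 : k0 / (Num.sqrt W + eta) * W <= k0 * Num.sqrt W.
    rewrite mulrAC -mulrA; apply: ler_wpM2l => //; exact: ltW.
  have h2 : (Num.sqrt W + eta) * k0 * (3 * K) = 3 * K * k0 * Num.sqrt W + e.
    by rewrite /eta; field; rewrite !gt_eqF // mulr_gt0 // mulr_gt0.
  have h3 : k0 * (1 + 3 * K) * Num.sqrt W = k0 * Num.sqrt W + 3 * K * k0 * Num.sqrt W by ring.
  move: hA' h1; rewrite h2 h3; lra.
have stepC : lam * mu * d <= k * (1 + 3 * K) * Num.sqrt W.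
  apply: (le_trans stepB); apply: ler_wpM2r => //.
  by apply: ler_wpM2r => //; lra.
rewrite mulrAC ler_pdivlMr //.
by rewrite mulrC.
Qed.
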